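(* Let $r\ge 1$ be an odd integer. For every nonnegative integer $n$, the number of overpartitions of $n$ in which every non-overlined part is even and greater than $r$ (overlined parts being unrestricted apart from being distinct) equals the number of partitions of $n$ in which no even integer less than $r$ appears as a part.
   Context: A partition of $n$ is a finite non-increasing sequence of positive integers (parts) summing to $n$ (the empty partition is the unique partition of $0$). An overpartition of $n$ is a partition of $n$ in which the first occurrence of each part size may be overlined; equivalently, a pair $(\lambda,\mu)$ with $\lambda$ a partition into distinct parts (the overlined parts), $\mu$ an arbitrary partition (the non-overlined parts), and $|\lambda|+|\mu|=n$. *)

(* Defs.v *)
From mathcomp Require Import all_boot.
Set Implicit Arguments.
Unset Strict Implicit.
Unset Printing Implicit Defensive.

Definition is_partition (n : nat) (s : seq nat) : bool :=
  [&& sorted geq s, all (fun p => 0 < p) s & sumn s == n].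

Definition is_distinct_partition (n : nat) (s : seq nat) : bool :=
  [&& sorted gtn s, all (fun p => 0 < p) s & sumn s == n].

(* An overpartition of n, as a pair (lambda, mu): lambda the overlined parts
   (distinct), mu the non-overlined parts, |lambda| + |mu| = n. *)
Definition is_overpartition (n : nat) (lm : seq nat * seq nat) : Prop :=
  is_distinct_partition (sumn lm.1) lm.1 /\ is_partition (sumn lm.2) lm.2 /\
  sumn lm.1 + sumn lm.2 = n.

(* "The number of elements of T satisfying P is k": P has a duplicate-free
   exhaustive enumeration of length k (in particular P is finite). *)
Definition has_card (T : eqType) (P : T -> Prop) (k : nat) : Prop :=
  exists s : seq T, [/\ uniq s, (forall x, P x <-> x \in s) & size s = k].

(* Main.v *)
Require Import Defs.
From mathcomp Require Import all_boot zify.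
Set Implicit Arguments. Unset Strict Implicit.

Definition v d := logn 2 d.
Definition op d := d %/ 2 ^ logn 2 d.

Lemma opK d : op d * 2 ^ v d = d.
Proof. by rewrite /op /v divnK // pfactor_dvdnn. Qed.

Lemma v_odd m i : odd m -> v (m * 2 ^ i) = i.
Proof.
move=> om; have m0 : 0 < m by case: m om.
rewrite /v lognM // ?expn_gt0 // pfactorK // logn_coprime //.
by rewrite coprime_sym coprimen2.
Qed.

Lemma op_odd m i : odd m -> op (m * 2 ^ i) = m.
Proof. by move=> om; rewrite /op -/(v _) v_odd // mulnK // expn_gt0. Qed.

Lemma op_odd_gt0 d : 0 < d -> odd (op d).
Proof.
move=> d0; have := opK d; set o := op d => e.
have o0 : 0 < o by move: d0; rewrite -e; case: o {e}.
apply: contraT; rewrite -dvdn2 => h.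
have : v d = v (o * 2 ^ v d) by rewrite e.
rewrite /v lognM ?expn_gt0 // pfactorK // [logn 2 o]lognE o0 h /=.
move=> /eqP; lia.
Qed.

Lemma eq_decomp d m i : 0 < d -> odd m ->
  (d == m * 2 ^ i) = (op d == m) && (v d == i).
Proof.
move=> d0 om; apply/eqP/andP.
  by move=> ->; rewrite op_odd // v_odd.
by case=> /eqP <- /eqP <-; rewrite opK.
Qed.

Lemma bin_exist N c : c < 2 ^ N -> \sum_(i < N) odd (c %/ 2 ^ i) * 2 ^ i = c.
Proof.
elim: N c => [|N IH] c.
  by rewrite big_ord0 expn0; case: c.
move=> cN; rewrite big_ord_recl /= expn0 divn1 muln1.
have -> : \sum_(i < N) odd (c %/ 2 ^ (lift ord0 i)) * 2 ^ (lift ord0 i)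
   = 2 * \sum_(i < N) odd (c./2 %/ 2 ^ i) * 2 ^ i.
  rewrite big_distrr /=; apply: eq_bigr => i _.
  by rewrite /bump /= add1n expnS divnMA divn2 mulnCA.
rewrite IH; first by rewrite mul2n odd_double_half.
by rewrite -divn2 ltn_divLR // -expnSr.
Qed.

Lemma bin_uniq N (b b' : nat -> bool) :
  \sum_(i < N) b i * 2 ^ i = \sum_(i < N) b' i * 2 ^ i ->
  forall i, i < N -> b i = b' i.
Proof.
elim: N b b' => [|N IH] b b'; first by [].
rewrite !big_ord_recl /= !expn0 !muln1.
have E : forall c : nat -> bool, \sum_(i < N) c (lift ord0 i) * 2 ^ (lift ord0 i)
   = 2 * \sum_(i < N) c i.+1 * 2 ^ i.
  move=> c; rewrite big_distrr /=; apply: eq_bigr => i _.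
  by rewrite /bump /= add1n expnS mulnCA.
rewrite !E => h.
have h0 : b 0 = b' 0.
  move: (congr1 odd h) => /=; rewrite !oddD; case: (b 0); case: (b' 0); case: (odd (\sum_(i < N) b i.+1 * 2 ^ i)); by case: (odd (\sum_(i < N) b' i.+1 * 2 ^ i)).
move: h; rewrite h0 => /eqP; rewrite eqn_add2l eqn_mul2l /= => /eqP h.
case=> [|i] //; rewrite ltnS => iN.
exact: (IH (fun i => b i.+1) (fun i => b' i.+1) h).
Qed.

Definition G (l : seq nat) := flatten [seq nseq (2 ^ v d) (op d) | d <- l].

Lemma count_G x l : count_mem x (G l) = \sum_(d <- l) (op d == x) * 2 ^ v d.
Proof.
elim: l => [|d l IH]; first by rewrite big_nil.
by rewrite big_cons /G /= count_cat count_nseq -IH.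
Qed.

Lemma sumn_G l : sumn (G l) = sumn l.
Proof.
elim: l => [|d l IH] //.
by rewrite /G /= sumn_cat sumn_nseq opK -IH.
Qed.

Lemma mem_G x l : all (fun d => 0 < d) l -> x \in G l -> odd x.
Proof.
move=> /allP lp /flattenP [s /mapP [d dl ->]] /nseqP [-> _].
exact/op_odd_gt0/lp.
Qed.

Lemma v_lt d N : 0 < d < 2 ^ N -> v d < N.
Proof.
case/andP=> d0 dN; rewrite -(@ltn_exp2l 2) //.
apply: leq_ltn_trans dN; exact: dvdn_leq d0 (pfactor_dvdnn 2 d).
Qed.

Lemma sum_pow N k : k < N -> \sum_(i < N) (k == i) * 2 ^ i = 2 ^ k.
Proof.
move=> kN; rewrite (bigD1 (Ordinal kN)) //= eqxx mul1n big1 ?addn0 //.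
move=> i; rewrite -val_eqE /= eq_sym => /negbTE ->; by [].
Qed.

Lemma sum_count (l : seq nat) y c : \sum_(d <- l) (d == y) * c = count_mem y l * c.
Proof.
elim: l => [|d l IH]; first by rewrite big_nil.
by rewrite big_cons IH /= mulnDl eq_sym.
Qed.

Lemma key N m l : odd m -> uniq l -> all (fun d => 0 < d < 2 ^ N) l ->
  \sum_(d <- l) (op d == m) * 2 ^ v d = \sum_(i < N) (m * 2 ^ i \in l) * 2 ^ i.
Proof.
move=> om ul /allP lb.
rewrite (eq_big_seq (fun d => \sum_(i < N) (d == m * 2 ^ i) * 2 ^ i)).
  rewrite exchange_big /=; apply: eq_bigr => i _.
  by rewrite sum_count count_uniq_mem.
move=> d dl; have /andP [d0 dN] := lb d dl.
rewrite (eq_bigr (fun i : 'I_N => (op d == m) * ((v d == i) * 2 ^ i))).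
  by rewrite -big_distrr /= sum_pow // v_lt // d0.
by move=> i _; rewrite eq_decomp // mulnA; case: (op d == m); case: (v d == i).
Qed.

Lemma ge_trans : transitive geq.
Proof. by move=> y x z h1 h2; exact: leq_trans h2 h1. Qed.
Lemma ge_anti : antisymmetric geq.
Proof. by move=> x y /andP [h1 h2]; apply/eqP; rewrite eqn_leq; apply/andP. Qed.
Lemma ge_total : total geq.
Proof. by move=> x y; rewrite /= orbC leq_total. Qed.
Lemma gt_trans : transitive gtn.
Proof. by move=> y x z h1 h2; exact: ltn_trans h2 h1. Qed.

Fixpoint lists (k m : nat) : seq (seq nat) :=
  match k with
  | 0 => [:: [::]]
  | k.+1 => [::] :: [seq x :: l | x <- iota 0 m.+1, l <- lists k m]
  end.

Lemma lists_mem k m s : size s <= k -> all (fun x => x <= m) s -> s \in lists k m.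
Proof.
elim: k s => [|k IH] [|x s] // sk /andP [xm sm].
rewrite in_cons; apply/orP; right; apply/allpairsPdep; exists x, s; split => //.
  by rewrite mem_iota /= add0n ltnS.
exact: IH.
Qed.

Lemma size_sumn s : all (fun d => 0 < d) s -> size s <= sumn s.
Proof. elim: s => [|x s IH] //= /andP [x0 /IH h]; rewrite -add1n leq_add //. Qed.

Lemma mem_sumn s x : x \in s -> x <= sumn s.
Proof.
elim: s => [|y s IH] //=; rewrite inE => /orP [/eqP -> | /IH h].
  exact: leq_addr.
exact: leq_trans h (leq_addl _ _).
Qed.

Lemma has_card_filter (T : eqType) (P : T -> Prop) (p : pred T) (L : seq T) :
  (forall x, P x <-> p x) -> (forall x, p x -> x \in L) ->
  has_card P (size (filter p (undup L))).
Proof.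
move=> Pp pL; exists (filter p (undup L)); split => //.
  by rewrite filter_uniq // undup_uniq.
move=> x; rewrite Pp mem_filter mem_undup; split.
  by move=> h; rewrite h pL.
by case/andP.
Qed.

Lemma has_card_map (T U : eqType) (P : T -> Prop) (Q : U -> Prop) (f : T -> U) e :
  uniq e -> (forall x, P x <-> x \in e) -> {in e &, injective f} ->
  (forall x, P x -> Q (f x)) -> (forall y, Q y -> exists x, P x /\ f x = y) ->
  has_card Q (size e).
Proof.
move=> ue Pe fi PQ QP; exists (map f e); split.
- by rewrite map_inj_in_uniq.
- move=> y; split.
    by case/QP => x [/Pe xe <-]; apply: map_f.
  by case/mapP => x /Pe xe ->; apply: PQ.
- by rewrite size_map.
Qed.

Lemma cnt0 (u : seq nat) m : all (fun p => ~~ odd p) u -> odd m -> count_mem m u = 0.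
Proof.
move=> /allP ue om; apply/eqP; rewrite -leqn0 leqNgt -has_count.
by apply/hasP => [[x /ue xe /eqP ex]]; move: xe; rewrite ex om.
Qed.

Lemma inj_half N l u l' u' :
  all (fun d => 0 < d < 2 ^ N) l -> all (fun d => 0 < d < 2 ^ N) l' ->
  uniq l -> uniq l' ->
  all (fun p => ~~ odd p) u -> all (fun p => ~~ odd p) u' ->
  perm_eq (G l ++ u) (G l' ++ u') -> {subset l <= l'}.
Proof.
move=> lb lb' ul ul' ue ue' /permP pe d dl.
have /andP [d0 dN] := allP lb d dl.
have om := op_odd_gt0 d0.
have := pe (pred1 (op d)); rewrite !count_cat (cnt0 ue) // (cnt0 ue') // !addn0 !count_G.
rewrite (key (N:=N) om) // (key (N:=N) om) // => e.
have := @bin_uniq N (fun i => op d * 2 ^ i \in l) (fun i => op d * 2 ^ i \in l') e (v d).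
rewrite opK dl => <- //; apply: v_lt; by rewrite d0.
Qed.

Lemma perm_sort' (leT : rel nat) s : perm_eq (sort leT s) s.
Proof. by rewrite perm_sort. Qed.

Definition Phi (lm : seq nat * seq nat) := sort geq (G lm.1 ++ lm.2).

Definition psb n r (lm : seq nat * seq nat) :=
  [&& is_distinct_partition (sumn lm.1) lm.1, is_partition (sumn lm.2) lm.2,
      sumn lm.1 + sumn lm.2 == n & all (fun p => ~~ odd p && (r < p)) lm.2].

Lemma psbP n r lm : (is_overpartition n lm /\ all (fun p => ~~ odd p && (r < p)) lm.2)
   <-> psb n r lm.
Proof.
rewrite /psb /is_overpartition; split.
  by case=> [[-> [-> /eqP ->]] ->].
by case/and4P => -> -> /eqP -> ->.
Qed.

Lemma all_odd_G l : all (fun d => 0 < d) l -> all odd (G l).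
Proof. by move=> lp; apply/allP => x; apply: mem_G. Qed.

Lemma Phi_target n r lm : psb n r lm ->
  is_partition n (Phi lm) /\ all (fun p => ~~ (~~ odd p && (p < r))) (Phi lm).
Proof.
case: lm => l u /and4P [/and3P [_ lp _] /and3P [_ up _] /eqP su ur] /=.
have go := all_odd_G lp.
split.
  rewrite /is_partition /Phi sort_sorted /=; last exact: ge_total.
  apply/andP; split.
    apply/allP => x; rewrite mem_sort mem_cat => /orP [/(allP go) | /(allP up)] //.
    by case: x.
  by rewrite (perm_sumn (perm_sort' _ _)) sumn_cat sumn_G su.
apply/allP => x; rewrite /Phi mem_sort mem_cat => /orP [/(allP go) -> // | /(allP ur)].
by case/andP => _ rx; rewrite negb_and ltnNge ltnW // orbT.
Qed.

Lemma psb_facts n r l u : psb n r (l, u) ->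
  [/\ all (fun d => 0 < d < 2 ^ n) l, uniq l, sorted gtn l,
      all (fun p => ~~ odd p) u & sorted geq u].
Proof.
case/and4P => /and3P [lg lp _] /and3P [ug _ _] /eqP su ur; split => //.
- apply/allP => d dl; rewrite (allP lp) //=.
  apply: leq_ltn_trans (ltn_expl _ (isT : 1 < 2)).
  by rewrite -su; apply: leq_trans (leq_addr _ _); apply: mem_sumn.
- exact: (sorted_uniq gt_trans (fun x => ltnn x) lg).
- by apply/allP => x /(allP ur) /andP [].
Qed.

Lemma Phi_inj n r lm lm' : psb n r lm -> psb n r lm' -> Phi lm = Phi lm' -> lm = lm'.
Proof.
case: lm => l u; case: lm' => l' u' h h'.
have [lb ul ls ue us] := psb_facts h.
have [lb' ul' ls' ue' us'] := psb_facts h'.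
move=> e; have pe : perm_eq (G l ++ u) (G l' ++ u').
  by rewrite -(perm_sort geq) /Phi /= in e *; rewrite e perm_sort.
have lp : all (fun d => 0 < d) l by apply/allP => d /(allP lb) /andP [].
have lp' : all (fun d => 0 < d) l' by apply/allP => d /(allP lb') /andP [].
have fu : forall l u, all (fun d => 0 < d) l -> all (fun p => ~~ odd p) u ->
    [seq p <- G l ++ u | ~~ odd p] = u.
  move=> l1 u1 l1p u1e; rewrite filter_cat (eq_in_filter (a2 := pred0)).
    by rewrite filter_pred0 /=; apply/all_filterP.
  by move=> x /(allP (all_odd_G l1p)) ->.
have eu : u = u'.
  apply: (sorted_eq ge_trans ge_anti us us').
  by rewrite -(fu l u lp ue) -(fu l' u' lp' ue'); apply: perm_filter.
have el : l = l'.
  apply: (irr_sorted_eq gt_trans (fun x => ltnn x) ls ls') => d; apply/idP/idP.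
    exact: (inj_half lb lb' ul ul' ue ue' pe).
  by apply: (inj_half lb' lb ul' ul ue' ue); rewrite perm_sym.
by rewrite el eu.
Qed.

Lemma Phi_surj n r (hr : odd r) s : is_partition n s ->
  all (fun p => ~~ (~~ odd p && (p < r))) s -> exists lm, psb n r lm /\ Phi lm = s.
Proof.
case/and3P => ss sp /eqP sn sr.
set K := 2 ^ (n + n).
set lam := rev [seq d <- iota 1 K | odd (count_mem (op d) s %/ 2 ^ v d)].
set u := [seq p <- s | ~~ odd p].
have cn : forall x, count_mem x s <= n.
  move=> x; apply: leq_trans (count_size _ _) _; rewrite -sn; exact: size_sumn.
have n2 : n < 2 ^ n by apply: ltn_expl.
have ul : uniq lam by rewrite rev_uniq filter_uniq // iota_uniq.
have meml : forall d, (d \in lam) = (0 < d < 1 + K) && odd (count_mem (op d) s %/ 2 ^ v d).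
  by move=> d; rewrite mem_rev mem_filter mem_iota andbC.
have lb : all (fun d => 0 < d < 2 ^ (n + n).+1) lam.
  apply/allP => d; rewrite meml => /andP [/andP [d0 dK] _]; rewrite d0 /=.
  apply: leq_trans dK _; have := expn_gt0 2 (n + n); rewrite expnS /K; lia.
have lp : all (fun d => 0 < d) lam by apply/allP => d /(allP lb) /andP [].
have bits : forall x i, odd x -> (x * 2 ^ i \in lam) = odd (count_mem x s %/ 2 ^ i).
  move=> x i ox; rewrite meml op_odd // v_odd //.
  case b: (odd (count_mem x s %/ 2 ^ i)); rewrite ?andbF // andbT.
  have x0 : 0 < x by apply: odd_gt0.
  have : 0 < count_mem x s %/ 2 ^ i by case: (_ %/ _) b.
  rewrite divn_gt0 ?expn_gt0 // => ci.
  have xs : x \in s by rewrite -has_pred1 has_count; apply: leq_trans ci; rewrite expn_gt0.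
  have xn : x <= n by rewrite -sn; apply: mem_sumn.
  have iN : 2 ^ i < 2 ^ n by apply: leq_ltn_trans n2; exact: leq_trans ci (cn x).
  rewrite muln_gt0 x0 expn_gt0 /= add1n ltnS /K expnD.
  by apply: ltnW; apply: ltn_mul => //; apply: leq_ltn_trans n2.
have cG : forall x, count_mem x (G lam) = count_mem x [seq p <- s | odd p].
  move=> x; rewrite count_filter.
  case ox: (odd x).
    rewrite [RHS](eq_count (a2 := pred1 x)); last first.
      by move=> y /=; case e: (y == x); rewrite //= (eqP e) ox.
    rewrite count_G (key (N := (n + n).+1) ox) //.
    rewrite (eq_bigr (fun i : 'I_(n + n).+1 => odd (count_mem x s %/ 2 ^ i) * 2 ^ i)).
      rewrite bin_exist //; apply: leq_ltn_trans (cn x) _; apply: ltn_trans n2 _.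
      by rewrite ltn_exp2l // ltnS leq_addr.
    by move=> i _; rewrite bits.
  rewrite [RHS](eq_count (a2 := pred0)); last first.
    by move=> y /=; case e: (y == x); rewrite //= (eqP e) ox.
  rewrite count_pred0; apply/eqP; rewrite -leqn0 leqNgt -has_count.
  apply/hasP => [[y /(mem_G lp) oy /eqP ey]]; move: oy; by rewrite ey ox.
have pe : perm_eq (G lam ++ u) s.
  rewrite perm_sym -(perm_filterC odd s); apply: perm_cat => //.
  by rewrite /perm_eq; apply/allP => x _ /=; rewrite cG.
have ls : sorted gtn lam.
  by rewrite rev_sorted; apply: sorted_filter; [exact: ltn_trans | exact: iota_ltn_sorted].
exists (lam, u); split.
  rewrite /psb /= /is_distinct_partition /is_partition ls lp !eqxx /=.
  have -> : sorted geq u by apply: sorted_filter ss; exact: ge_trans.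
  rewrite andbT /=; apply/and3P; split.
  - by apply/allP => x; rewrite mem_filter => /andP [_ /(allP sp)].
  - by apply/eqP; rewrite -sumn_G -sumn_cat (perm_sumn pe) sn.
  - apply/allP => x; rewrite mem_filter => /andP [ex /(allP sr)].
    rewrite ex /= -leqNgt leq_eqVlt => /orP [/eqP rx|] //.
    by move: ex; rewrite -rx hr.
apply: (sorted_eq ge_trans ge_anti) => //.
  exact: sort_sorted ge_total _.
by rewrite /Phi perm_sort.
Qed.

Theorem proposition2p4 (r : nat) (hr1 : 1 <= r) (hr : odd r) (n : nat) :
  exists k : nat,
    has_card (fun lm : seq nat * seq nat =>
                is_overpartition n lm /\
                all (fun p => ~~ odd p && (r < p)) lm.2) k /\
    has_card (fun s : seq nat =>
                is_partition n s /\
                all (fun p => ~~ (~~ odd p && (p < r))) s) k.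
Proof.
set L := [seq (a, b) | a <- lists n n, b <- lists n n].
set e := filter (psb n r) (undup L).
have inL : forall lm, psb n r lm -> lm \in L.
  case=> l u /and4P [/and3P [_ lp _] /and3P [_ up _] /eqP su _].
  have hl : forall s, all (fun d => 0 < d) s -> sumn s <= n -> s \in lists n n.
    move=> s sp sn; apply: lists_mem.
      exact: leq_trans (size_sumn sp) sn.
    by apply/allP => x xs; apply: leq_trans sn; apply: mem_sumn.
  apply/allpairsP; exists (l, u); split => //; apply: hl => //=; rewrite -su.
    exact: leq_addr.
  exact: leq_addl.
exists (size e); split.
  by apply: has_card_filter => // lm; apply: psbP.
apply: (has_card_map (P := fun lm => psb n r lm) (f := Phi)).
- by rewrite filter_uniq // undup_uniq.
- move=> x; rewrite mem_filter mem_undup; split; first by move=> h; rewrite h inL.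
  by case/andP.
- move=> x y; rewrite !mem_filter => /andP [hx _] /andP [hy _].
  exact: (Phi_inj hx hy).
- move=> x; exact: (@Phi_target n r x).
- move=> y [py ay]; exact: (@Phi_surj n r hr y py ay).
Qed.
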